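(* Let $(G,\omega)$ be a weighted digraph without loops, and suppose $G$ has $b$ reciprocal pairs of edges $\{(u_i,v_i),(v_i,u_i)\}$, $i=1,\dots,b$, with weights $w(i)=\omega((u_i,v_i))$ and $w'(i)=\omega((v_i,u_i))$. Let $\Phi(A,t):=I+tL^T\sqrt Z\,(I-tV)^{-1}\sqrt Z\,R$. Then, as rational functions of $t$, \[\det\Phi(A,t)=\frac{\prod_{i=1}^b\bigl(1-t^2w(i)w'(i)\bigr)}{\det(I-tV)}.\]
   Context: $G=(V(G),E)$ with $n$ vertices and $m$ edges, $\omega:E\to(0,\infty)$. Source matrix $L\in\{0,1\}^{m\times n}$: $L_{ej}=1$ iff $e=(j,\cdot)$; target matrix $R\in\{0,1\}^{m\times n}$: $R_{ej}=1$ iff $e=(\cdot,j)$. $Z$ is the $m\times m$ diagonal matrix with $Z_{ee}=\omega(e)$, and $\sqrt Z$ its entrywise square root. $V$ is the $m\times m$ matrix with $V_{ef}=\sqrt{\omega(e)\omega(f)}$ if $e=(i,j)$, $f=(j,k)$ with $k\ne i$, and $V_{ef}=0$ otherwise. *)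

(* Defs.v *)
From HB Require Import structures.
From mathcomp Require Import all_boot all_order all_algebra.
Set Implicit Arguments. Unset Strict Implicit. Unset Printing Implicit Defensive.
Import Order.TTheory GRing.Theory Num.Theory.
Local Open Scope ring_scope.

(* A digraph with vertices 'I_n and edges 'I_m; edge e goes from src e to tgt e. *)

Definition simple_digraph n m (src tgt : 'I_m -> 'I_n) : Prop :=
  forall e f : 'I_m, src e = src f -> tgt e = tgt f -> e = f.

Definition loopless n m (src tgt : 'I_m -> 'I_n) : Prop :=
  forall e : 'I_m, src e != tgt e.

Definition Lmx (R : pzRingType) n m (src : 'I_m -> 'I_n) : 'M[R]_(m, n) :=
  \matrix_(e < m, j < n) (src e == j)%:R.

Definition Rmx (R : pzRingType) n m (tgt : 'I_m -> 'I_n) : 'M[R]_(m, n) :=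
  \matrix_(e < m, j < n) (tgt e == j)%:R.

Definition Zmx (R : pzRingType) m (w : 'I_m -> R) : 'M[R]_m :=
  \matrix_(e < m, f < m) ((e == f)%:R * w e).

Definition sqrtZmx (R : rcfType) m (w : 'I_m -> R) : 'M[R]_m :=
  \matrix_(e < m, f < m) ((e == f)%:R * Num.sqrt (w e)).

Definition Vmx (R : rcfType) n m (src tgt : 'I_m -> 'I_n) (w : 'I_m -> R)
  : 'M[R]_m :=
  \matrix_(e < m, f < m)
    (((tgt e == src f) && (tgt f != src e))%:R * Num.sqrt (w e * w f)).

Definition Phi (R : rcfType) n m (src tgt : 'I_m -> 'I_n) (w : 'I_m -> R)
  (t : R) : 'M[R]_n :=
  1%:M + t *: ((Lmx R src)^T *m sqrtZmx w
                *m invmx (1%:M - t *: Vmx src tgt w) *m sqrtZmx w *m Rmx R tgt).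

(* reciprocal pairs {(u,v),(v,u)}: each pair listed once, as the ordered pair
   of edge indices (e,f) with e = (u,v), f = (v,u) and u < v *)
Definition recip_pair n m (src tgt : 'I_m -> 'I_n) (p : 'I_m * 'I_m) : bool :=
  [&& src p.2 == tgt p.1, tgt p.2 == src p.1 & (src p.1 < tgt p.1)%N].

Definition recip_prod (R : rcfType) n m (src tgt : 'I_m -> 'I_n)
  (w : 'I_m -> R) (t : R) : R :=
  \prod_(p : 'I_m * 'I_m | recip_pair src tgt p) (1 - t ^+ 2 * w p.1 * w p.2).

(* Main.v *)
Require Import Defs.
From HB Require Import structures.
From mathcomp Require Import all_boot all_order all_algebra.
Import Order.TTheory GRing.Theory Num.Theory.
From mathcomp Require Import fingroup perm.
From mathcomp Require Import lra ring.
Local Open Scope ring_scope.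

Lemma sylvester (R : comRingType) n m (A : 'M[R]_(n,m)) (B : 'M[R]_(m,n)) :
  \det (1%:M + A *m B) = \det (1%:M + B *m A).
Proof.
have e1 : block_mx 1%:M (-A) B 1%:M
   = block_mx 1%:M 0 B 1%:M *m block_mx 1%:M (-A) 0 (1%:M + B *m A).
  rewrite mulmx_block !mul1mx !mulmx1 !mul0mx !addr0.
  by rewrite mulmxN addrCA addNr addr0.
have e2 : block_mx 1%:M (-A) B 1%:M
   = block_mx (1%:M + A *m B) (-A) 0 1%:M *m block_mx 1%:M 0 B 1%:M.
  rewrite mulmx_block !mul1mx !mulmx1 !mul0mx ?add0r ?addr0 mulNmx mulmx0 add0r.
  by rewrite addrK.
have := congr1 determinant e2; rewrite {1}e1 !det_mulmx !det_ublock !det_lblock.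
by rewrite !det1 !mul1r !mulr1 => ->.
Qed.

Lemma det_split_trig (R : comRingType) m (K : 'M[R]_m) (p : pred 'I_m) :
  (forall e f, e != f -> K e f != 0 -> p e && ~~ p f) -> \det K = \prod_i K i i.
Proof.
move=> HK; rewrite /determinant (bigD1 (1%g : 'S_m)) //= [X in _ + X]big1 ?addr0.
  by rewrite odd_perm1 expr0 mul1r; apply: eq_bigr => i _; rewrite perm1.
move=> s s1.
case: (pickP (fun i => K i (s i) == 0)) => [i /eqP Ki|H].
  by rewrite (bigD1 i) //= Ki mul0r mulr0.
exfalso.
case: (pickP (fun i => s i != i)) => [e se|H2]; last first.
  by move/eqP: s1; apply; apply/permP => i; rewrite perm1; apply/eqP/negbNE/negbT/H2.
have /andP[_ pf] := HK e (s e) (ltac:(by rewrite eq_sym)) (negbT (H e)).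
have sf : s e != s (s e).
  apply/negP => /eqP /perm_inj E; by rewrite -E eqxx in se.
have /andP[pf' _] := HK (s e) (s (s e)) sf (negbT (H (s e))).
by rewrite pf' in pf.
Qed.

Section Main.
Variables (R : rcfType) (n m : nat) (src tgt : 'I_m -> 'I_n) (w : 'I_m -> R).
Hypotheses (hs : simple_digraph src tgt) (hl : loopless src tgt)
  (hw : forall e, 0 < w e).

Definition cnd e f := (tgt e == src f) && (tgt f == src e).
Definition pf e := (src e < tgt e)%N.
Definition Jmx : 'M[R]_m :=
  \matrix_(e, f) ((cnd e f)%:R * Num.sqrt (w e * w f)).
Definition N1 : 'M[R]_m := \matrix_(e, f) ((pf e)%:R * Jmx e f).
Definition N2 : 'M[R]_m := \matrix_(e, f) ((~~ pf e)%:R * Jmx e f).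

Lemma mulmx_Sr k (A : 'M[R]_(k, m)) :
  A *m sqrtZmx w = \matrix_(i, j) (A i j * Num.sqrt (w j)).
Proof.
apply/matrixP => i j; rewrite !mxE (bigD1 j) //= big1 ?addr0.
  by rewrite mxE eqxx mul1r.
by move=> k0 /negbTE nk; rewrite mxE nk mul0r mulr0.
Qed.

Lemma mulmx_Sl k (A : 'M[R]_(m, k)) :
  sqrtZmx w *m A = \matrix_(i, j) (Num.sqrt (w i) * A i j).
Proof.
apply/matrixP => i j; rewrite !mxE (bigD1 i) //= big1 ?addr0.
  by rewrite mxE eqxx mul1r.
by move=> k0; rewrite eq_sym => /negbTE nk; rewrite mxE nk mul0r mul0r.
Qed.

Lemma RL : Rmx R tgt *m (Lmx R src)^T = \matrix_(e, f) (tgt e == src f)%:R.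
Proof.
apply/matrixP => e f; rewrite !mxE (bigD1 (tgt e)) //= big1 ?addr0.
  by rewrite !mxE eqxx mul1r eq_sym.
by move=> k0 /negbTE nk; rewrite !mxE eq_sym nk mul0r.
Qed.

Lemma sqrtw e f : Num.sqrt (w e * w f) = Num.sqrt (w e) * Num.sqrt (w f).
Proof. by rewrite sqrtrM // ltW. Qed.

Lemma QVJ (t : R) :
  1%:M - t *: Vmx src tgt w + t *: (sqrtZmx w *m Rmx R tgt *m ((Lmx R src)^T *m sqrtZmx w))
  = 1%:M + t *: Jmx.
Proof.
rewrite !mulmxA -(mulmxA _ (Rmx R tgt)) RL mulmx_Sr mulmx_Sl.
apply/matrixP => e f; rewrite !mxE -addrA; congr (_ + _).
rewrite sqrtw /cnd; case: (tgt e == src f); case: (tgt f == src e) => /=;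
  rewrite ?mul1r ?mul0r ?mulr1 ?mulr0; lra.
Qed.


Lemma cndC e f : cnd e f = cnd f e.
Proof. by rewrite /cnd andbC. Qed.

Lemma cnd_p {e f} : cnd e f -> pf f = ~~ pf e.
Proof.
move=> /andP[/eqP a /eqP b]; rewrite /pf -a b -leqNgt.
have := hl e; rewrite -val_eqE /= => ne.
by rewrite ltn_neqAle eq_sym ne.
Qed.

Lemma cnd_uniq {e f g} : cnd e f -> cnd f g -> g = e.
Proof.
move=> /andP[/eqP a /eqP b] /andP[/eqP c /eqP d].
by apply: hs; rewrite -?c -?d ?b ?a.
Qed.

Lemma J_split : Jmx = N1 + N2.
Proof.
apply/matrixP => e f; rewrite !mxE -mulrDl.
by case: (pf e); rewrite /= ?add0r ?addr0 mul1r.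
Qed.

Lemma N1N1 : N1 *m N1 = 0.
Proof.
apply/matrixP => e g; rewrite !mxE big1 // => f _; rewrite !mxE.
case c: (cnd e f); last by rewrite mul0r !mulr0 mul0r.
by rewrite (cnd_p c); case: (pf e); rewrite ?mul0r ?mulr0 ?mul0r.
Qed.

Lemma N1N2_off {e g} : e != g -> (N1 *m N2) e g = 0.
Proof.
move=> neg; rewrite !mxE big1 // => f _; rewrite !mxE.
case c: (cnd e f); last by rewrite mul0r !mulr0 mul0r.
case c': (cnd f g); last by rewrite mul0r !mulr0.
by rewrite (cnd_uniq c c') eqxx in neg.
Qed.

Lemma N1N2_diag e : (N1 *m N2) e e =
  (pf e)%:R * \sum_f ((cnd e f)%:R * (w e * w f)).
Proof.
rewrite !mxE mulr_sumr; apply: eq_bigr => f _; rewrite !mxE.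
case c: (cnd e f); last by rewrite !mul0r !mulr0 mul0r.
rewrite -cndC c (cnd_p c) negbK [w f * w e]mulrC.
rewrite !mul1r; have h2 := sqr_sqrtr (mulr_ge0 (ltW (hw e)) (ltW (hw f))); rewrite expr2 in h2.
case: (pf e); rewrite ?mul0r ?mul1r //=.

Qed.


Lemma K_eq (t : R) : (1%:M - t *: N1) *m (1%:M + t *: Jmx)
  = 1%:M + t *: N2 - (t ^+ 2) *: (N1 *m N2).
Proof.
rewrite mulmxBl !mul1mx mulmxDr mulmx1 -scalemxAl -scalemxAr scalerA.
rewrite J_split mulmxDr N1N1 add0r scalerDr expr2.
rewrite opprD !addrA; congr (_ - _).
by rewrite -addrA [t *: N1 + _]addrC addrA addrK.
Qed.

Lemma cnd_diag e : cnd e e = false.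
Proof.
apply/negbTE; rewrite /cnd; apply/negP => /andP[/eqP a _].
by move: (hl e); rewrite a eqxx.
Qed.

Lemma det_1N1 (t : R) : \det (1%:M - t *: N1) = 1.
Proof.
rewrite (@det_split_trig _ _ _ pf).
  by apply: big1 => i _; rewrite !mxE cnd_diag eqxx /= !mul0r !mulr0 subr0.
move=> e f nef; rewrite !mxE (negbTE nef) /= sub0r oppr_eq0 mulf_eq0 negb_or.
move=> /andP[_]; rewrite !mulf_eq0 !negb_or => /andP[pe /andP[c _]].
have c' : cnd e f by case: (cnd e f) c; rewrite ?eqxx.
have p' : pf e by case: (pf e) pe; rewrite ?eqxx.
by rewrite (cnd_p c') p'.
Qed.

Lemma det_K (t : R) : \det (1%:M + t *: N2 - (t ^+ 2) *: (N1 *m N2))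
  = \prod_e (1 - t ^+ 2 * ((pf e)%:R * \sum_f ((cnd e f)%:R * (w e * w f)))).
Proof.
rewrite (@det_split_trig _ _ _ (fun e => ~~ pf e)).
  apply: eq_bigr => e _; rewrite mxE [X in _ + X]mxE [X in _ - X]mxE N1N2_diag !mxE cnd_diag eqxx /= !mul0r !mulr0 addr0. done.
move=> e f nef; rewrite mxE [X in _ + X]mxE [X in _ - X]mxE (N1N2_off nef) !mxE (negbTE nef) /= add0r mulr0 subr0.
rewrite !mulf_eq0 !negb_or => /andP[_ /andP[pe /andP[c _]]].
have c' : cnd e f by case: (cnd e f) c; rewrite ?eqxx.
have p' : ~~ pf e by case: (~~ pf e) pe; rewrite ?eqxx.
by rewrite (cnd_p c') p'.
Qed.

Lemma prod_match (t : R) :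
  \prod_e (1 - t ^+ 2 * ((pf e)%:R * \sum_f ((cnd e f)%:R * (w e * w f))))
  = recip_prod src tgt w t.
Proof.
have -> : recip_prod src tgt w t = \prod_e \prod_(f | recip_pair src tgt (e, f))
    (1 - t ^+ 2 * w e * w f).
  by rewrite pair_big_dep; apply: eq_bigl => -[a b].
apply: eq_bigr => e _.
have rp f : recip_pair src tgt (e, f) = pf e && cnd e f.
  by rewrite /recip_pair /cnd /pf /= [src f == _]eq_sym; case: (_ < _)%N; case: (_ == _); case: (_ == _).
case pe : (pf e).
  case: (pickP (cnd e)) => [f0 c0 | none].
    rewrite [RHS](big_pred1 f0); last first.
      move=> f; rewrite /= rp pe /=; apply/idP/eqP => [c|->//].
      by apply: (cnd_uniq _ c); rewrite cndC.
    rewrite (bigD1 f0) //= big1 ?addr0 ?c0 ?mul1r ?mulrA //.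
    move=> f nf; case c: (cnd e f); last by rewrite mul0r.
    by move: nf; rewrite (cnd_uniq (etrans (cndC f0 e) c0) c) eqxx.
  rewrite big_pred0; last by move=> f; rewrite rp pe none.
  by rewrite big1 ?mulr0 ?subr0 // => f _; rewrite none mul0r.
rewrite big_pred0; last by move=> f; rewrite rp pe.
by rewrite mul0r mulr0 subr0.
Qed.

End Main.
Arguments cnd {n m}. Arguments pf {n m}. Arguments Jmx {R n m}. Arguments N1 {R n m}. Arguments N2 {R n m}.

Theorem theorem5p6 (R : rcfType) (n m : nat) (src tgt : 'I_m -> 'I_n)
  (w : 'I_m -> R) (t : R) :
  simple_digraph src tgt -> loopless src tgt ->
  (forall e, 0 < w e) ->
  \det (1%:M - t *: Vmx src tgt w) != 0 ->
  \det (Phi src tgt w t) =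
    recip_prod src tgt w t / \det (1%:M - t *: Vmx src tgt w).
Proof.
move=> hs hl hw hdet.
have hu : 1%:M - t *: Vmx src tgt w \in unitmx by rewrite unitmxE unitfE.
set X := invmx (1%:M - t *: Vmx src tgt w).
have e1 : Phi src tgt w t = 1%:M + (t *: ((Lmx R src)^T *m sqrtZmx w))
   *m (X *m (sqrtZmx w *m Rmx R tgt)).
  by rewrite /Phi -scalemxAl !mulmxA.
rewrite e1 sylvester.
have e2 : 1%:M + X *m (sqrtZmx w *m Rmx R tgt) *m (t *: ((Lmx R src)^T *m sqrtZmx w))
  = X *m (1%:M - t *: Vmx src tgt w +
      t *: (sqrtZmx w *m Rmx R tgt *m ((Lmx R src)^T *m sqrtZmx w))).
  by rewrite mulmxDr mulVmx // -!scalemxAr !mulmxA.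
rewrite e2 (@QVJ _ _ _ _ _ _ hw) det_mulmx det_inv.
have := det_mulmx (1%:M - t *: N1 src tgt w) (1%:M + t *: Jmx src tgt w).
rewrite (@K_eq _ _ _ _ _ _ hl) (@det_K _ _ _ _ _ _ hs hl hw) (@det_1N1 _ _ _ _ _ _ hl) mul1r (@prod_match _ _ _ _ _ _ hs) => <-.
by rewrite mulrC.
Qed.
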